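(* For $1\le n\le\infty$, the category of (left) $\mathcal C_n$-modules in the symmetric monoidal category of vertical bicomplexes is isomorphic to the category $\mathrm{Ch}_n$ of $n$-multicomplexes: a module $(M,d_0^M,\lambda)$ corresponds to the $n$-multicomplex $(M,d_0^M,d_1^M,d_2^M,\dots)$ with $d_i^M(m)=\lambda(d_i\otimes m)$ for $i\ge1$, and module morphisms correspond to morphisms of $n$-multicomplexes.
   Context: $R$ is a commutative unital ring. For $1\le n\le\infty$, an $n$-multicomplex is a $\mathbb Z\times\mathbb Z$-bigraded $R$-module $A$ with $R$-linear maps $d_i$ ($i\ge0$) of bidegree $(-i,1-i)$ such that $\sum_{i+j=l}(-1)^id_id_j=0$ for all $l\ge0$ and $d_i=0$ for $i\ge n$; morphisms are bidegree $(0,0)$ maps commuting with all $d_i$; the category is $\mathrm{Ch}_n$. A vertical bicomplex is a $1$-multicomplex (only $d_0$, with $d_0^2=0$); vertical bicomplexes form a symmetric monoidal category under $(A\otimes B,d_0\otimes1+1\otimes d_0)$ with Koszul signs for the pairing $\langle(x_1,x_2),(y_1,y_2)\rangle=x_1y_1+x_2y_2$. A monoid there (''dg algebra'') is a bigraded unital associative algebra with a square-zero derivation of bidegree $(0,1)$; a module over it is a vertical bicomplex $M$ with an action $\lambda$ compatible with differentials. $\mathcal C_\infty=R\langle d_1,d_2,\dots\rangle$ is the free bigraded associative unital $R$-algebra on generators $d_i$ ($i\ge1$) of bidegree $(-i,1-i)$. For $k\ge1$ let $S_k=\sum_{i+j=k,\ i,j\ge1}(-1)^{i+1}d_id_j$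 (so $S_1=0$). $\delta_0$ is the unique derivation of bidegree $(0,1)$ with $\delta_0(d_i)=S_i$, satisfying $\delta_0(xy)=\delta_0(x)y+(-1)^{x_2}x\delta_0(y)$ for $x$ of bidegree $(x_1,x_2)$. For $n\ge1$, $I_n$ is the two-sided ideal generated by $S_k$ and $d_k$ for all $k\ge n$, $I_\infty=0$, and $\mathcal C_n=(\mathcal C_\infty/I_n,\delta_0)$. *)

(* Defs.v *)
From HB Require Import structures.
From mathcomp Require Import all_boot all_order all_algebra.
Set Implicit Arguments. Unset Strict Implicit. Unset Printing Implicit Defensive.
Import Order.TTheory GRing.Theory Num.Theory.
Local Open Scope ring_scope.

Inductive extnat := Fin of nat | Inf.

Definition ext_le (n : extnat) (k : nat) : Prop :=
  match n with Fin m => (m <= k)%N | Inf => False end.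

Definition ext_ge1 (n : extnat) : Prop :=
  match n with Fin m => (1 <= m)%N | Inf => True end.

Record bigraded (R : comPzRingType) := Bigraded {
  bg_mod :> lmodType R;
  bg_hom : int -> int -> bg_mod -> Prop;   (* bg_hom p q x : x lies in M_{p,q} *)
  bg_hom0 : forall p q, bg_hom p q 0;
  bg_homD : forall p q x y, bg_hom p q x -> bg_hom p q y -> bg_hom p q (x + y);
  bg_homZ : forall p q (r : R) x, bg_hom p q x -> bg_hom p q (r *: x);
  bg_span : forall x : bg_mod, exists (s : seq (int * int)) (c : int * int -> bg_mod),
     [/\ uniq s, (forall k, bg_hom k.1 k.2 (c k)) & x = \sum_(k <- s) c k];
  bg_indep : forall (s : seq (int * int)) (c : int * int -> bg_mod),
     uniq s -> (forall k, bg_hom k.1 k.2 (c k)) -> \sum_(k <- s) c k = 0 ->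
     forall k, k \in s -> c k = 0 }.

Definition lin (R : comPzRingType) (M N : lmodType R) (f : M -> N) : Prop :=
  forall (r : R) x y, f (r *: x + y) = r *: f x + f y.

Definition bideg (R : comPzRingType) (M N : bigraded R) (a b : int) (f : M -> N) : Prop :=
  forall p q x, bg_hom p q x -> bg_hom (p + a) (q + b) (f x).

Definition ksign (R : comPzRingType) (q : int) : R := (-1) ^+ (absz q).

Definition vbicomplex (R : comPzRingType) (M : bigraded R) (d0 : M -> M) : Prop :=
  [/\ lin d0, bideg 0 1 d0 & forall x, d0 (d0 x) = 0].

Definition multicomplex (R : comPzRingType) (n : extnat) (M : bigraded R)
    (d : nat -> M -> M) : Prop :=
  [/\ forall i, lin (d i),
      forall i : nat, bideg (- (i%:Z)) (1 - i%:Z) (d i),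
      forall (l : nat) (x : M), \sum_(i < l.+1) ((-1) ^+ i : R) *: d i (d (l - i)%N x) = 0
    & forall i, ext_le n i -> forall x, d i x = 0].

Definition multicomplex_morphism (R : comPzRingType) (M N : bigraded R)
    (d : nat -> M -> M) (e : nat -> N -> N) (f : M -> N) : Prop :=
  [/\ lin f, bideg 0 0 f & forall i x, f (d i x) = e i (f x)].

(* ---------- the free algebra C_infty = R<d_1, d_2, ...> ----------
   An element is a finitely supported function  words -> R,  a word
   [:: i1; ...; ik] (all ij >= 1) standing for the monomial d_i1 ... d_ik. *)
Definition word := seq nat.
Definition raw (R : comPzRingType) := word -> R.

Definition finsupp (R : comPzRingType) (a : raw R) : Prop :=
  exists s : seq word, forall w, a w != 0 -> (w \in s) && all (fun i => 0 < i)%N w.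

Definition zerof (R : comPzRingType) : raw R := fun _ => 0.
Definition addf (R : comPzRingType) (a b : raw R) : raw R := fun w => a w + b w.
Definition subf (R : comPzRingType) (a b : raw R) : raw R := fun w => a w - b w.
Definition scalef (R : comPzRingType) (r : R) (a : raw R) : raw R := fun w => r * a w.
Definition wordf (R : comPzRingType) (u : word) : raw R := fun w => (w == u)%:R.
Definition onef (R : comPzRingType) : raw R := wordf R [::].
Definition gen (R : comPzRingType) (i : nat) : raw R := wordf R [:: i].
Definition mulf (R : comPzRingType) (a b : raw R) : raw R :=
  fun w => \sum_(i < (size w).+1) a (take i w) * b (drop i w).

Definition Sk (R : comPzRingType) (k : nat) : raw R :=
  fun w => \sum_(1 <= i < k) (-1) ^+ (i + 1) * (w == [:: i; (k - i)%N])%:R.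

(* bidegree of a monomial: d_i has bidegree (-i, 1-i) *)
Definition wdeg (w : word) : int * int :=
  (- ((sumn w)%:Z), (size w)%:Z - (sumn w)%:Z).

Definition homog (R : comPzRingType) (a : raw R) (p q : int) : Prop :=
  forall w, a w != 0 -> wdeg w = (p, q).

(* delta_0 on monomials, by the Leibniz rule
   delta_0(d_i x) = S_i x + (-1)^{(1-i)} d_i delta_0(x) *)
Fixpoint delta_word (R : comPzRingType) (w : word) : raw R :=
  match w with
  | [::] => zerof R
  | i :: w' => addf (mulf (Sk R i) (wordf R w'))
                    (scalef ((-1) ^+ (i + 1)) (mulf (gen R i) (delta_word R w')))
  end.

Definition Delta (R : comPzRingType) (a b : raw R) : Prop :=
  exists s : seq word, [/\ uniq s, forall w, a w != 0 -> w \in s &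
     b = fun v => \sum_(w <- s) a w * delta_word R w v].

Inductive In_ideal (R : comPzRingType) (n : extnat) : raw R -> Prop :=
| I_zero : In_ideal n (zerof R)
| I_d k : ext_le n k -> In_ideal n (gen R k)
| I_S k : ext_le n k -> In_ideal n (Sk R k)
| I_add a b : In_ideal n a -> In_ideal n b -> In_ideal n (addf a b)
| I_scale r a : In_ideal n a -> In_ideal n (scalef r a)
| I_mull u a : finsupp u -> In_ideal n a -> In_ideal n (mulf u a)
| I_mulr a u : finsupp u -> In_ideal n a -> In_ideal n (mulf a u).

Definition coset (R : comPzRingType) (n : extnat) (a : raw R) : raw R -> Prop :=
  fun b => In_ideal n (subf b a).

Definition Cn (R : comPzRingType) (n : extnat) : Type :=
  {P : raw R -> Prop | exists a, finsupp a /\ P = coset n a}.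

Definition rep (R : comPzRingType) (n : extnat) (a : raw R) (x : Cn R n) : Prop :=
  proj1_sig x a.

(* ---------- (left) C_n-modules in vertical bicomplexes ----------
   lam x m = lambda(x (x) m).  The operations of C_n (sum, scalar,
   product, unit, differential) are expressed through representatives. *)
Definition is_Cn_module (R : comPzRingType) (n : extnat) (M : bigraded R)
    (d0 : M -> M) (lam : Cn R n -> M -> M) : Prop :=
      (forall x, lin (lam x)) /\
      (forall x y z a b, rep a x -> rep b y -> rep (addf a b) z ->
          forall m, lam z m = lam x m + lam y m) /\
      (forall (r : R) x z a, rep a x -> rep (scalef r a) z ->
          forall m, lam z m = r *: lam x m) /\
      (forall x, rep (onef R) x -> forall m, lam x m = m) /\
      (forall x y z a b, rep a x -> rep b y -> rep (mulf a b) z ->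
          forall m, lam z m = lam x (lam y m)) /\
      (forall x a p q, rep a x -> homog a p q ->
          forall p' q' m, bg_hom p' q' m -> bg_hom (p + p') (q + q') (lam x m)) /\
      (* lambda commutes with differentials, Koszul sign (-1)^{a_2} *)
      (forall x y a b p q, rep a x -> homog a p q -> Delta a b -> rep b y ->
          forall m, d0 (lam x m) = lam y m + ksign R q *: lam x (d0 m)).

Definition module_morphism (R : comPzRingType) (n : extnat) (M N : bigraded R)
    (d0 : M -> M) (e0 : N -> N) (lam : Cn R n -> M -> M) (mu : Cn R n -> N -> N)
    (f : M -> N) : Prop :=
  [/\ lin f, bideg 0 0 f, (forall m, f (d0 m) = e0 (f m))
    & forall x m, f (lam x m) = mu x (f m)].

Definition assoc_family (R : comPzRingType) (n : extnat) (M : bigraded R)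
    (d0 : M -> M) (lam : Cn R n -> M -> M) (d : nat -> M -> M) : Prop :=
  d 0%N = d0 /\
  forall i x, (0 < i)%N -> rep (gen R i) x -> forall m, d i m = lam x m.

(* Main.v *)
Require Import Defs.
From HB Require Import structures.
From mathcomp Require Import all_boot all_order all_algebra.
From mathcomp Require Import zify ring.
From Stdlib Require Import FunctionalExtensionality PropExtensionality ProofIrrelevance IndefiniteDescription.
Import Defs.
Set Implicit Arguments. Unset Strict Implicit. Unset Printing Implicit Defensive.
Import Order.TTheory GRing.Theory Num.Theory.
Local Open Scope ring_scope.

Definition act (R : comPzRingType) (M : bigraded R) (d : nat -> M -> M) (w : word) (m : M) : M :=
  foldr (fun i x => d i x) m w.
Definition evs (R : comPzRingType) (M : bigraded R) (d : nat -> M -> M) (s : seq word) (a : raw R) (m : M) : M :=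
  \sum_(w <- undup s) a w *: act d w m.
Definition cov (R : comPzRingType) (a : raw R) (s : seq word) := forall w, a w != 0 -> w \in s.

Lemma linD (R : comPzRingType) (M N : lmodType R) (f : M -> N) : lin f -> forall x y, f (x + y) = f x + f y.
Proof. by move=> h x y; have := h 1 x y; rewrite !scale1r. Qed.
Lemma lin0 (R : comPzRingType) (M N : lmodType R) (f : M -> N) : lin f -> f 0 = 0.
Proof. move=> h; have H := h 1 0 0; rewrite !scale1r addr0 in H.
by rewrite -[LHS](addrK (f 0)) -H subrr. Qed.
Lemma linZ (R : comPzRingType) (M N : lmodType R) (f : M -> N) : lin f -> forall r x, f (r *: x) = r *: f x.
Proof. by move=> h r x; have := h r x 0; rewrite (lin0 h) !addr0. Qed.
Lemma lin_sum (R : comPzRingType) (M N : lmodType R) (f : M -> N) (I : Type) (s : seq I) (F : I -> M) :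
  lin f -> f (\sum_(i <- s) F i) = \sum_(i <- s) f (F i).
Proof.
move=> h; elim: s => [|i s IH]; first by rewrite !big_nil lin0.
by rewrite !big_cons linD // IH.
Qed.

Lemma lin_comp (R : comPzRingType) (M N P : lmodType R) (f : N -> P) (g : M -> N) :
  lin f -> lin g -> lin (fun x => f (g x)).
Proof. by move=> hf hg r x y; rewrite hg hf. Qed.

Lemma lin_act (R : comPzRingType) (M : bigraded R) (d : nat -> M -> M) (w : word) :
  (forall i, lin (d i)) -> lin (act d w).
Proof.
move=> hd; elim: w => [|i w IH] /=; first by [].
exact: lin_comp (hd i) IH.
Qed.

Lemma lin_evs (R : comPzRingType) (M : bigraded R) (d : nat -> M -> M) (s : seq word) (a : raw R) :
  (forall i, lin (d i)) -> lin (evs d s a).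
Proof.
move=> hd r x y; rewrite /evs scaler_sumr -big_split /=; apply: eq_bigr => w _.
by rewrite (lin_act w hd) scalerDr !scalerA mulrC.
Qed.

Lemma evs_add (R : comPzRingType) (M : bigraded R) (d : nat -> M -> M) (s : seq word) (a b : raw R) (m : M) :
  evs d s (addf a b) m = evs d s a m + evs d s b m.
Proof. by rewrite /evs -big_split; apply: eq_bigr => w _; rewrite /addf scalerDl. Qed.

Lemma evs_scale (R : comPzRingType) (M : bigraded R) (d : nat -> M -> M) (s : seq word) (r : R) (a : raw R) (m : M) :
  evs d s (scalef r a) m = r *: evs d s a m.
Proof. by rewrite /evs scaler_sumr; apply: eq_bigr => w _; rewrite /scalef scalerA. Qed.

Lemma evs_sum (R : comPzRingType) (M : bigraded R) (d : nat -> M -> M) (s : seq word) (I : Type) (J : seq I)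
   (g : I -> raw R) (m : M) :
  evs d s (fun w => \sum_(j <- J) g j w) m = \sum_(j <- J) evs d s (g j) m.
Proof.
rewrite /evs (exchange_big_dep xpredT) //=; apply: eq_bigr => w _.
by rewrite scaler_suml.
Qed.

Lemma evs_word1 (R : comPzRingType) (M : bigraded R) (d : nat -> M -> M) (s : seq word) (x : word) (c : R) (m : M) :
  x \in s -> evs d s (fun w => c * (w == x)%:R) m = c *: act d x m.
Proof.
move=> xs; rewrite /evs (bigD1_seq x) ?mem_undup ?undup_uniq //= eqxx mulr1.
rewrite big1 ?addr0 // => w /negPf ->; by rewrite mulr0 scale0r.
Qed.

Lemma ev_eq (R : comPzRingType) (M : bigraded R) (d : nat -> M -> M) (s s' : seq word) (a : raw R) (m : M) :
  cov a s -> cov a s' -> evs d s a m = evs d s' a m.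
Proof.
move=> hs hs'.
have E : forall t, cov a t -> evs d t a m = \sum_(w <- filter (fun w => a w != 0) (undup t)) a w *: act d w m.
  move=> t ht; rewrite big_filter /evs (bigID (fun w => a w != 0)) /= [X in _ + X]big1 ?addr0 //.
  by move=> w; rewrite negbK => /eqP ->; rewrite scale0r.
rewrite (E s hs) (E s' hs'); apply: perm_big; apply: uniq_perm.
- by rewrite filter_uniq // undup_uniq.
- by rewrite filter_uniq // undup_uniq.
move=> w; rewrite !mem_filter !mem_undup.
by case: (boolP (a w != 0)) => //= h; rewrite (hs w h) (hs' w h).
Qed.

Lemma decomp (R : comPzRingType) (a : raw R) (s : seq word) (w : word) :
  cov a s -> a w = \sum_(u <- undup s) a u * (w == u)%:R.
Proof.
move=> hs; case: (boolP (w \in s)) => ws.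
  rewrite (bigD1_seq w) ?mem_undup ?undup_uniq //= eqxx mulr1 big1 ?addr0 //.
  by move=> u /negPf; rewrite eq_sym => ->; rewrite mulr0.
rewrite big1_seq; last first.
  move=> u /andP[_]; rewrite mem_undup => us.
  have -> : (w == u) = false by apply/eqP => E; rewrite E us in ws.
  by rewrite mulr0.
by apply/eqP; apply: contraR ws => /hs.
Qed.

Lemma splitsum (R : comPzRingType) (w u v : word) :
  \sum_(i < (size w).+1) ((take i w == u)%:R * (drop i w == v)%:R : R) = (w == u ++ v)%:R.
Proof.
case: (eqVneq w (u ++ v)) => [E|NE].
  have hk : (size u < (size w).+1)%N by rewrite E size_cat ltnS leq_addr.
  rewrite (bigD1 (Ordinal hk)) //=.
  have -> : take (size u) w = u by rewrite E take_size_cat.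
  have -> : drop (size u) w = v by rewrite E drop_size_cat.
  idtac.
  rewrite !eqxx mulr1 big1 ?addr0 // => i /eqP Ni.
  have -> : (take i w == u) = false; last by rewrite mul0r.
  apply/eqP => Et; apply: Ni; apply: val_inj => /=.
  have := congr1 size Et; rewrite size_take.
  by have := ltn_ord i; rewrite ltnS leq_eqVlt => /orP[/eqP->|->]; rewrite ?ltnn.
rewrite big1 // => i _.
case: eqP => [Et|]; last by rewrite mul0r.
case: eqP => [Ed|]; last by rewrite mulr0.
by move: NE; rewrite -(cat_take_drop i w) Et Ed eqxx.
Qed.

Lemma mulf_formula (R : comPzRingType) (a b : raw R) (sa sb : seq word) (w : word) :
  cov a sa -> cov b sb ->
  mulf a b w = \sum_(u <- undup sa) \sum_(v <- undup sb) a u * b v * (w == u ++ v)%:R.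
Proof.
move=> ha hb; rewrite /mulf.
under eq_bigr => i _ do rewrite (decomp (take i w) ha) (decomp (drop i w) hb) mulr_suml.
rewrite exchange_big /=; apply: eq_bigr => u _.
under eq_bigr => i _ do rewrite mulr_sumr.
rewrite exchange_big /=; apply: eq_bigr => v _.
rewrite -splitsum mulr_sumr; apply: eq_bigr => i _.
by rewrite mulrACA.
Qed.

Lemma evs_ext (R : comPzRingType) (M : bigraded R) (d : nat -> M -> M) (s : seq word) (a b : raw R) (m : M) :
  (forall w, a w = b w) -> evs d s a m = evs d s b m.
Proof. by move=> h; rewrite /evs; apply: eq_bigr => w _; rewrite h. Qed.

Lemma sum_nz (R : comPzRingType) (I : eqType) (J : seq I) (F : I -> R) :
  \sum_(j <- J) F j != 0 -> exists2 j, j \in J & F j != 0.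
Proof.
elim: J => [|j J IH]; first by rewrite big_nil eqxx.
rewrite big_cons; case: (eqVneq (F j) 0) => [->|Fj]; last by move=> _; exists j; rewrite ?mem_head.
by rewrite add0r => /IH [k kJ Fk]; exists k; rewrite // in_cons kJ orbT.
Qed.

Lemma mul_nz (R : comPzRingType) (x y : R) : x * y != 0 -> x != 0 /\ y != 0.
Proof. by case: (eqVneq x 0) => [->|hx]; rewrite ?mul0r ?eqxx //; case: (eqVneq y 0) => [->|]; rewrite ?mulr0 ?eqxx. Qed.

Lemma bnz (R : comPzRingType) (b : bool) : ((b%:R : R) != 0) -> b.
Proof. by case: b; rewrite ?eqxx. Qed.

Definition pos (w : word) := all (fun i => 0 < i)%N w.

Lemma fsE (R : comPzRingType) (a : raw R) :
  finsupp a <-> exists s, cov a s /\ (forall w, a w != 0 -> pos w).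
Proof.
split=> [[s hs]|[s [hs hp]]].
  exists s; split=> w /hs /andP[] //.
by exists s => w hw; rewrite (hs w hw); exact: (hp w hw).
Qed.

Lemma cov_mul (R : comPzRingType) (a b : raw R) (sa sb : seq word) :
  cov a sa -> cov b sb -> cov (mulf a b) [seq u ++ v | u <- sa, v <- sb].
Proof.
move=> ha hb w; rewrite (mulf_formula w ha hb) => /sum_nz [u uS] /sum_nz [v vS].
case/mul_nz => _ /bnz /eqP ->.
by apply: allpairs_f; rewrite -mem_undup.
Qed.

Lemma pos_mul (R : comPzRingType) (a b : raw R) (sa sb : seq word) :
  cov a sa -> cov b sb -> (forall w, a w != 0 -> pos w) -> (forall w, b w != 0 -> pos w) ->
  forall w, mulf a b w != 0 -> pos w.
Proof.
move=> ha hb pa pb w; rewrite (mulf_formula w ha hb) => /sum_nz [u uS] /sum_nz [v vS].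
case/mul_nz => /mul_nz [/pa hu /pb hv] /bnz /eqP ->.
by rewrite /pos all_cat; apply/andP; split.
Qed.

Lemma evs_mul (R : comPzRingType) (M : bigraded R) (d : nat -> M -> M) (a b : raw R) (sa sb : seq word) (m : M) :
  (forall i, lin (d i)) -> cov a sa -> cov b sb ->
  evs d [seq u ++ v | u <- sa, v <- sb] (mulf a b) m = evs d sa a (evs d sb b m).
Proof.
move=> hd ha hb; rewrite (evs_ext _ _ _ (fun w => mulf_formula w ha hb)) evs_sum.
rewrite [in RHS]/evs; apply: eq_big_seq => u uS.
rewrite evs_sum (lin_sum _ _ (lin_act u hd)) scaler_sumr; apply: eq_big_seq => v vS.
rewrite (@evs_word1 _ _ _ _ (u ++ v) (a u * b v)); last first.
  by move: uS vS; rewrite !mem_undup; apply: allpairs_f.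
by rewrite (linZ (lin_act u hd)) scalerA /act foldr_cat.
Qed.


Lemma zlem (V : zmodType) (X S Y : V) : X + (S + Y) = 0 -> - S = X + Y.
Proof. by move=> E; apply: (addrI S); rewrite subrr addrCA E. Qed.

Lemma Sk_rel (R : comPzRingType) (M : bigraded R) (d : nat -> M -> M) (k : nat) (y : M) :
  (forall (l : nat) (x : M), \sum_(i < l.+1) ((-1) ^+ i : R) *: d i (d (l - i)%N x) = 0) -> (0 < k)%N ->
  \sum_(1 <= i < k) ((-1) ^+ (i + 1) : R) *: d i (d (k - i)%N y) = d 0%N (d k y) + (-1) ^+ k *: d k (d 0%N y).
Proof.
move=> H; case: k => // k _.
have := H k.+1 y.
rewrite -(big_mkord xpredT (fun i => ((-1) ^+ i : R) *: d i (d (k.+1 - i)%N y))).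
rewrite big_nat_recl // big_nat_recr //= subn0 subnn expr0 scale1r.
have -> : \sum_(0 <= i < k) ((-1) ^+ i.+1 : R) *: d i.+1 (d (k.+1 - i.+1)%N y) =
          \sum_(1 <= i < k.+1) ((-1) ^+ i : R) *: d i (d (k.+1 - i)%N y) by rewrite big_add1.
move=> E.
have -> : \sum_(1 <= i < k.+1) ((-1) ^+ (i + 1) : R) *: d i (d (k.+1 - i)%N y) =
          - \sum_(1 <= i < k.+1) ((-1) ^+ i : R) *: d i (d (k.+1 - i)%N y).
  rewrite -sumrN; apply: eq_bigr => i _; by rewrite exprD expr1 mulrN1 scaleNr.
exact: zlem.
Qed.

Lemma fs_cov (R : comPzRingType) (a : raw R) : finsupp a -> exists s, cov a s.
Proof. by case/fsE => s [hs _]; exists s. Qed.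

Lemma fs_add (R : comPzRingType) (a b : raw R) : finsupp a -> finsupp b -> finsupp (addf a b).
Proof.
case/fsE => s [hs ps]; case/fsE => t [ht pt]; apply/fsE; exists (s ++ t); split=> w; rewrite /addf.
  case: (eqVneq (a w) 0) => [->|/hs]; first by rewrite add0r => /ht; rewrite mem_cat orbC => ->.
  by rewrite mem_cat => ->.
by case: (eqVneq (a w) 0) => [->|/ps //]; rewrite add0r => /pt.
Qed.

Lemma fs_scale (R : comPzRingType) (r : R) (a : raw R) : finsupp a -> finsupp (scalef r a).
Proof.
case/fsE => s [hs ps]; apply/fsE; exists s; split=> w; rewrite /scalef => /mul_nz [_ h].
  exact: hs. exact: ps.
Qed.

Lemma fs_mul (R : comPzRingType) (a b : raw R) : finsupp a -> finsupp b -> finsupp (mulf a b).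
Proof.
case/fsE => s [hs ps]; case/fsE => t [ht pt]; apply/fsE; exists [seq u ++ v | u <- s, v <- t]; split.
  exact: cov_mul. exact: (pos_mul hs ht).
Qed.

Lemma cov_word (R : comPzRingType) (u : word) : cov (wordf R u) [:: u].
Proof. by move=> w /bnz /eqP ->; rewrite mem_head. Qed.

Lemma fs_word (R : comPzRingType) (u : word) : pos u -> finsupp (wordf R u).
Proof. move=> pu; apply/fsE; exists [:: u]; split; first exact: cov_word. by move=> w /bnz /eqP ->. Qed.

Lemma fs_zero (R : comPzRingType) : finsupp (zerof R).
Proof. by exists [::] => w; rewrite /zerof eqxx. Qed.

Definition Skl (k : nat) : seq word := [seq [:: i; (k - i)%N] | i <- index_iota 1 k].

Lemma fs_Sk_aux (R : comPzRingType) (k : nat) : cov (Sk R k) (Skl k) /\ forall w, Sk R k w != 0 -> pos w.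
Proof.
split=> w; rewrite /Sk => /sum_nz [i iI] /mul_nz [_ /bnz /eqP ->].
  by apply: map_f.
move: iI; rewrite mem_index_iota => /andP [h1 h2].
by rewrite /pos /= h1 subn_gt0 h2.
Qed.

Lemma fs_Sk (R : comPzRingType) (k : nat) : finsupp (Sk R k).
Proof. by apply/fsE; exists (Skl k); exact: fs_Sk_aux. Qed.

Lemma evs_wordf (R : comPzRingType) (M : bigraded R) (d : nat -> M -> M) (s : seq word) (u : word) (m : M) :
  u \in s -> evs d s (wordf R u) m = act d u m.
Proof.
move=> us; rewrite (evs_ext _ _ _ (b := fun w => 1 * (w == u)%:R)); last by move=> w; rewrite mul1r.
by rewrite evs_word1 // scale1r.
Qed.

Lemma evs_Sk (R : comPzRingType) (M : bigraded R) (d : nat -> M -> M) (k : nat) (m : M) :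
  evs d (Skl k) (Sk R k) m = \sum_(1 <= i < k) ((-1) ^+ (i + 1) : R) *: d i (d (k - i)%N m).
Proof.
rewrite /Sk evs_sum; apply: eq_big_seq => i iI.
by rewrite evs_word1 //; apply: map_f.
Qed.

Lemma evs_zero (R : comPzRingType) (M : bigraded R) (d : nat -> M -> M) (s : seq word) (m : M) :
  evs d s (zerof R) m = 0.
Proof. by rewrite /evs big1 // => w _; rewrite scale0r. Qed.

Lemma ext_pos (n : extnat) (k : nat) : ext_ge1 n -> ext_le n k -> (0 < k)%N.
Proof. by case: n => //= m h1 h2; apply: leq_trans h2. Qed.

Lemma ideal_ok (R : comPzRingType) (n : extnat) (M : bigraded R) (d : nat -> M -> M) (a : raw R) :
  ext_ge1 n -> multicomplex n d -> In_ideal n a ->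
  finsupp a /\ forall s, cov a s -> forall m, evs d s a m = 0.
Proof.
move=> hn [hlin hdeg hrel hvan]; elim=> {a}.
- by split; [exact: fs_zero | move=> s _ m; exact: evs_zero].
- move=> k hk; have k0 := ext_pos hn hk.
  split; first by apply: fs_word; rewrite /pos /= k0.
  move=> s hs m; rewrite (ev_eq _ _ hs (@cov_word R [:: k])) evs_wordf ?mem_head //=.
  exact: hvan.
- move=> k hk; have k0 := ext_pos hn hk.
  split; first exact: fs_Sk.
  move=> s hs m; rewrite (ev_eq _ _ hs (proj1 (@fs_Sk_aux R k))) evs_Sk Sk_rel //.
  by rewrite (hvan k hk m) (hvan k hk) (lin0 (hlin 0%N)) scaler0 addr0.
- move=> a b _ [fa ea] _ [fb eb]; split; first exact: fs_add.
  case: (fs_cov fa) => sa ca; case: (fs_cov fb) => sb cb.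
  have cab : cov (addf a b) (sa ++ sb).
    move=> w; rewrite /addf mem_cat; case: (eqVneq (a w) 0) => [->|/ca -> //].
    by rewrite add0r => /cb ->; rewrite orbT.
  move=> s hs m; rewrite (ev_eq _ _ hs cab) evs_add.
  rewrite -(ev_eq _ _ ca) ?ea ?add0r -?(ev_eq _ _ cb) ?eb //.
  + by move=> w /cb; rewrite mem_cat orbC => ->.
  + by move=> w /ca; rewrite mem_cat => ->.
- move=> r a _ [fa ea]; split; first exact: fs_scale.
  move=> s hs m; case: (fs_cov fa) => sa ca.
  have csa : cov (scalef r a) sa by move=> w /mul_nz [_ /ca].
  by rewrite (ev_eq _ _ hs csa) evs_scale (ea _ ca) scaler0.
- move=> u a fu _ [fa ea]; split; first exact: fs_mul.
  case: (fs_cov fu) => su cu; case: (fs_cov fa) => sa ca.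
  move=> s hs m; rewrite (ev_eq _ _ hs (cov_mul cu ca)) evs_mul // (ea _ ca).
  by apply: lin0; apply: lin_evs.
- move=> a u fu _ [fa ea]; split; first exact: fs_mul.
  case: (fs_cov fu) => su cu; case: (fs_cov fa) => sa ca.
  by move=> s hs m; rewrite (ev_eq _ _ hs (cov_mul ca cu)) evs_mul // (ea _ ca).
Qed.

Lemma ideal_fs (R : comPzRingType) (n : extnat) (a : raw R) :
  ext_ge1 n -> In_ideal n a -> finsupp a.
Proof.
move=> hn; elim=> {a}.
- exact: fs_zero.
- by move=> k hk; apply: fs_word; rewrite /pos /= (ext_pos hn hk).
- by move=> k _; apply: fs_Sk.
- by move=> a b _ ha _ hb; apply: fs_add.
- by move=> r a _ ha; apply: fs_scale.
- by move=> u a fu _ ha; apply: fs_mul.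
- by move=> a u fu _ ha; apply: fs_mul.
Qed.

Lemma raw_ext (R : comPzRingType) (a b : raw R) : (forall w, a w = b w) -> a = b.
Proof. exact: functional_extensionality. Qed.

Lemma ideal_sub (R : comPzRingType) (n : extnat) (a b c : raw R) :
  In_ideal n (subf a b) -> In_ideal n (subf b c) -> In_ideal n (subf a c).
Proof.
move=> h1 h2; have -> : subf a c = addf (subf a b) (subf b c).
  by apply: raw_ext => w; rewrite /subf /addf addrA subrK.
exact: I_add.
Qed.

Lemma ideal_symm (R : comPzRingType) (n : extnat) (a b : raw R) :
  In_ideal n (subf a b) -> In_ideal n (subf b a).
Proof.
move=> h; have -> : subf b a = scalef (-1) (subf a b).
  by apply: raw_ext => w; rewrite /subf /scalef mulN1r opprB.
exact: I_scale.
Qed.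

Lemma ideal_refl (R : comPzRingType) (n : extnat) (a : raw R) : In_ideal n (subf a a).
Proof.
have -> : subf a a = zerof R by apply: raw_ext => w; rewrite /subf subrr.
exact: I_zero.
Qed.

Definition mkC (R : comPzRingType) (n : extnat) (a : raw R) (h : finsupp a) : Cn R n :=
  exist _ (coset n a) (ex_intro _ a (conj h erefl)).

Lemma rep_mkC (R : comPzRingType) (n : extnat) (a : raw R) (h : finsupp a) : rep a (mkC n h).
Proof. exact: ideal_refl. Qed.

Lemma coset_rep (R : comPzRingType) (n : extnat) (a : raw R) (x : Cn R n) :
  rep a x -> proj1_sig x = coset n a.
Proof.
case: x => P [a0 [h0 E]] ha; rewrite /rep /= in ha *; subst P.
apply: functional_extensionality => b; apply: propositional_extensionality; rewrite /coset.
split=> hb; first by apply: ideal_sub hb (ideal_symm ha).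
exact: ideal_sub hb ha.
Qed.

Lemma CnE (R : comPzRingType) (n : extnat) (a : raw R) (x y : Cn R n) :
  rep a x -> rep a y -> x = y.
Proof.
move=> hx hy; have ex := coset_rep hx; have ey := coset_rep hy.
case: x hx ex => P px /= _ EP; case: y hy ey => Q qy /= _ EQ.
subst P Q; by rewrite (proof_irrelevance _ px qy).
Qed.

Lemma rep_fs (R : comPzRingType) (n : extnat) (a : raw R) (x : Cn R n) :
  ext_ge1 n -> rep a x -> finsupp a.
Proof.
move=> hn; case: x => P [a0 [h0 E]]; rewrite /rep /= => h; subst P; rewrite /coset in h.
have -> : a = addf (subf a a0) a0 by apply: raw_ext => w; rewrite /addf /subf subrK.
by apply: fs_add => //; apply: ideal_fs h.
Qed.

Lemma rep_ex (R : comPzRingType) (n : extnat) (x : Cn R n) : exists a, finsupp a /\ rep a x.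
Proof.
case: x => P [a0 [h0 E]]; exists a0; split => //.
by rewrite /rep /= E; apply: ideal_refl.
Qed.

Lemma rep_ideal (R : comPzRingType) (n : extnat) (a b : raw R) (x : Cn R n) :
  rep a x -> rep b x -> In_ideal n (subf b a).
Proof. by move=> ha hb; move: hb; rewrite /rep (coset_rep ha). Qed.

Lemma cov_sub (R : comPzRingType) (a : raw R) (s t : seq word) : cov a s -> {subset s <= t} -> cov a t.
Proof. by move=> h st w /h /st. Qed.

Lemma mulf_word (R : comPzRingType) (u v : word) : mulf (wordf R u) (wordf R v) = wordf R (u ++ v).
Proof. by apply: raw_ext => w; rewrite /mulf /wordf splitsum. Qed.

Definition dec (R : comPzRingType) (a : raw R) (t : seq word) : raw R :=
  foldr (fun u acc => addf (scalef (a u) (wordf R u)) acc) (zerof R) t.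

Lemma decE (R : comPzRingType) (a : raw R) (t : seq word) w :
  dec a t w = \sum_(u <- t) a u * (w == u)%:R.
Proof. elim: t => [|u t IH]; first by rewrite big_nil. by rewrite big_cons /= /addf IH. Qed.

Lemma dec_eq (R : comPzRingType) (a : raw R) (s : seq word) :
  cov a s -> a = dec a (filter (fun u => a u != 0) (undup s)).
Proof.
move=> hs; apply: raw_ext => w; rewrite decE big_filter (decomp w hs).
rewrite [LHS](bigID (fun u => a u != 0)) /= [X in _ + X = _]big1 ?addr0 //.
by move=> u; rewrite negbK => /eqP ->; rewrite mul0r.
Qed.

Lemma G (R : comPzRingType) (n : extnat) (M : bigraded R) (d0 : M -> M) (lam : Cn R n -> M -> M)
  (d : nat -> M -> M) :
  ext_ge1 n -> is_Cn_module d0 lam -> assoc_family d0 lam d -> (forall i, lin (d i)) ->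
  forall a x, finsupp a -> rep a x -> forall s, cov a s -> forall m, lam x m = evs d s a m.
Proof.
move=> hn [hl [hadd [hsc [hone [hmul _]]]]] [_ hass] hd.
pose Q (a : raw R) := forall x, rep a x -> forall s, cov a s -> forall m : M, lam x m = evs d s a m.
have Qadd : forall a b, finsupp a -> finsupp b -> Q a -> Q b -> Q (addf a b).
  move=> a b fa fb Qa Qb z hz s hs m.
  case: (fs_cov fa) => sa ca; case: (fs_cov fb) => sb cb.
  have cab : cov (addf a b) (sa ++ sb).
    move=> w; rewrite /addf mem_cat; case: (eqVneq (a w) 0) => [->|/ca -> //].
    by rewrite add0r => /cb ->; rewrite orbT.
  rewrite (hadd _ _ _ _ _ (rep_mkC n fa) (rep_mkC n fb) hz) (Qa _ (rep_mkC n fa) _ ca) (Qb _ (rep_mkC n fb) _ cb).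
  have ca' : cov a (sa ++ sb) by apply: (cov_sub ca) => w; rewrite mem_cat => ->.
  have cb' : cov b (sa ++ sb) by apply: (cov_sub cb) => w; rewrite mem_cat orbC => ->.
  by rewrite (ev_eq _ _ hs cab) evs_add (ev_eq _ _ ca ca') (ev_eq _ _ cb cb').
have Qsc : forall r a, finsupp a -> Q a -> Q (scalef r a).
  move=> r a fa Qa z hz s hs m; case: (fs_cov fa) => sa ca.
  have csa : cov (scalef r a) sa by move=> w /mul_nz [_ /ca].
  by rewrite (hsc _ _ _ _ (rep_mkC n fa) hz) (Qa _ (rep_mkC n fa) _ ca) (ev_eq _ _ hs csa) evs_scale.
have Qmul : forall a b, finsupp a -> finsupp b -> Q a -> Q b -> Q (mulf a b).
  move=> a b fa fb Qa Qb z hz s hs m.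
  case: (fs_cov fa) => sa ca; case: (fs_cov fb) => sb cb.
  rewrite (hmul _ _ _ _ _ (rep_mkC n fa) (rep_mkC n fb) hz) (Qb _ (rep_mkC n fb) _ cb) (Qa _ (rep_mkC n fa) _ ca).
  by rewrite (ev_eq _ _ hs (cov_mul ca cb)) evs_mul.
have Qone : Q (onef R).
  move=> x hx s hs m; rewrite hone // (ev_eq _ _ hs (@cov_word R [::])) evs_wordf ?mem_head //.
have Qword : forall u, pos u -> Q (wordf R u).
  elim=> [|i u IH] pu; first exact: Qone.
  move: pu; rewrite /pos /= => /andP [i0 pu].
  rewrite -(mulf_word R [:: i] u); apply: Qmul.
  - by apply: fs_word; rewrite /pos /= i0.
  - exact: fs_word.
  - move=> x hx s hs m; rewrite -(hass i x i0 hx m) (ev_eq _ _ hs (@cov_word R [:: i])) evs_wordf ?mem_head //.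
  - exact: IH.
have Qdec : forall a t, all pos t -> finsupp (dec a t) /\ Q (dec a t).
  move=> a; elim=> [|u t IH] /=.
    split; first exact: fs_zero.
    have -> : zerof R = scalef 0 (onef R) by apply: raw_ext => w; rewrite /scalef mul0r.
    apply: Qsc => //; exact: fs_word.
  case/andP => pu /IH [ft Qt].
  have fu : finsupp (scalef (a u) (wordf R u)) by apply: fs_scale; apply: fs_word.
  split; first exact: fs_add.
  apply: Qadd => //; apply: Qsc; [exact: fs_word | exact: Qword].
move=> a x fa; case/fsE: (fa) => s0 [c0 p0].
rewrite (dec_eq c0) => hx s hs m.
apply: (proj2 (Qdec a _ _)) => //.
apply/allP => u; rewrite mem_filter => /andP [/p0 //].
Qed.

Lemma cov_add (R : comPzRingType) (a b : raw R) (s t : seq word) :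
  cov a s -> cov b t -> cov (addf a b) (s ++ t).
Proof.
move=> ca cb w; rewrite /addf mem_cat; case: (eqVneq (a w) 0) => [->|/ca -> //].
by rewrite add0r => /cb ->; rewrite orbT.
Qed.

Lemma cov_scale (R : comPzRingType) (r : R) (a : raw R) (s : seq word) : cov a s -> cov (scalef r a) s.
Proof. by move=> ca w /mul_nz [_ /ca]. Qed.

Lemma cov_delta (R : comPzRingType) (w : word) : exists s, cov (delta_word R w) s.
Proof.
elim: w => [|i w [c IH]] /=; first by exists [::] => v; rewrite /zerof eqxx.
eexists; apply: cov_add; first apply: cov_mul (proj1 (@fs_Sk_aux R i)) (@cov_word R w).
apply: cov_scale; exact: cov_mul (@cov_word R [:: i]) IH.
Qed.

Definition sgn (R : comPzRingType) (w : word) : R := (-1) ^+ (size w + sumn w).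

Lemma alg1 (R : comPzRingType) (V : lmodType R) (X Y Z : V) (s t : R) :
  X + s *: Y + (- s) *: (Y - t *: Z) = X - (- s * t) *: Z.
Proof.
by rewrite scalerBr !scaleNr addrA addrK scalerA mulNr scaleNr.
Qed.

Lemma linBZ (R : comPzRingType) (M N : lmodType R) (f : M -> N) (x z : M) (t : R) :
  lin f -> f (x - t *: z) = f x - t *: f z.
Proof. by move=> h; rewrite -scaleNr addrC h scaleNr addrC. Qed.

Lemma Sk_rel_all (R : comPzRingType) (M : bigraded R) (d : nat -> M -> M) (k : nat) (y : M) :
  lin (d 0%N) ->
  (forall (l : nat) (x : M), \sum_(i < l.+1) ((-1) ^+ i : R) *: d i (d (l - i)%N x) = 0) ->
  \sum_(1 <= i < k) ((-1) ^+ (i + 1) : R) *: d i (d (k - i)%N y) = d 0%N (d k y) + (-1) ^+ k *: d k (d 0%N y).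
Proof.
move=> h0 H; case: k => [|k]; last by apply: Sk_rel.
have E : d 0%N (d 0%N y) = 0 by have := H 0%N y; rewrite big_ord1 expr0 scale1r.
by rewrite big_geq // E scaler0 addr0.
Qed.

Lemma KW (R : comPzRingType) (n : extnat) (M : bigraded R) (d : nat -> M -> M) :
  multicomplex n d -> forall (w : word) (s : seq word), cov (delta_word R w) s -> forall m : M,
  evs d s (delta_word R w) m = d 0%N (act d w m) - sgn R w *: act d w (d 0%N m).
Proof.
move=> [hlin _ hrel _]; elim=> [|i w IH] s hs m.
  by rewrite /= evs_zero /sgn /= expr0 scale1r subrr.
case: (cov_delta R w) => c cc.
set A := [seq u ++ v | u <- Skl i, v <- [:: w]].
set B := [seq u ++ v | u <- [:: [:: i]], v <- c].
have cA : cov (mulf (Sk R i) (wordf R w)) A := cov_mul (proj1 (@fs_Sk_aux R i)) (@cov_word R w).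
have cB : cov (mulf (gen R i) (delta_word R w)) B := cov_mul (@cov_word R [:: i]) cc.
have cA' : cov (mulf (Sk R i) (wordf R w)) (A ++ B) by apply: (cov_sub cA) => v vA; rewrite mem_cat vA.
have cB' : cov (mulf (gen R i) (delta_word R w)) (A ++ B) by apply: (cov_sub cB) => v vB; rewrite mem_cat vB orbT.
have -> : delta_word R (i :: w) = addf (mulf (Sk R i) (wordf R w))
   (scalef ((-1) ^+ (i + 1)) (mulf (gen R i) (delta_word R w))) by [].
rewrite (ev_eq _ _ hs (cov_add cA (@cov_scale R ((-1) ^+ (i + 1)) _ _ cB))) evs_add evs_scale.
rewrite (ev_eq _ _ cA' cA) (ev_eq _ _ cB' cB) !evs_mul //; last exact: cov_word.
rewrite evs_wordf ?mem_head // evs_Sk (IH _ cc) evs_wordf ?mem_head //=.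
rewrite Sk_rel_all // (linBZ _ _ _ (hlin i)).
have -> : sgn R (i :: w) = - (-1) ^+ i * sgn R w.
  by rewrite /sgn /= addSn exprS addnCA exprD mulrA mulN1r.
rewrite exprD expr1 mulrN1 alg1 //.
- exact: cov_word.
- exact: (proj1 (@fs_Sk_aux R i)).
Qed.

Lemma act_deg (R : comPzRingType) (M : bigraded R) (d : nat -> M -> M) :
  (forall i : nat, bideg (- (i%:Z)) (1 - i%:Z) (d i)) ->
  forall (w : word) (p q : int) (m : M), bg_hom p q m ->
  bg_hom (p + (wdeg w).1) (q + (wdeg w).2) (act d w m).
Proof.
move=> hdeg; elim=> [|i w IH] p q m hm.
  by rewrite /wdeg /= oppr0 subr0 !addr0.
have E1 : p + (wdeg (i :: w)).1 = p + (wdeg w).1 + - (i%:Z) by rewrite /wdeg /=; lia.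
have E2 : q + (wdeg (i :: w)).2 = q + (wdeg w).2 + (1 - i%:Z) by rewrite /wdeg /=; lia.
rewrite E1 E2; apply: hdeg; exact: IH.
Qed.

Lemma ksign_wdeg (R : comPzRingType) (w : word) (p q : int) :
  wdeg w = (p, q) -> ksign R q = sgn R w.
Proof.
rewrite /wdeg => [[_ <-]]; rewrite /ksign /sgn.
rewrite -signr_odd -[in RHS]signr_odd; congr (_ ^+ _).
case: (leqP (sumn w) (size w)) => h.
  by rewrite distnEl // oddB // oddD.
by rewrite distnEr ?(ltnW h) // oddB ?(ltnW h) // oddD addbC.
Qed.

Definition srep (R : comPzRingType) (n : extnat) (x : Cn R n) : raw R :=
  proj1_sig (constructive_indefinite_description _ (rep_ex x)).

Lemma srep_spec (R : comPzRingType) (n : extnat) (x : Cn R n) : finsupp (srep x) /\ rep (srep x) x.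
Proof. exact: (proj2_sig (constructive_indefinite_description _ (rep_ex x))). Qed.

Definition scov (R : comPzRingType) (n : extnat) (x : Cn R n) : seq word :=
  proj1_sig (constructive_indefinite_description _ (fs_cov (proj1 (srep_spec x)))).

Lemma scov_spec (R : comPzRingType) (n : extnat) (x : Cn R n) : cov (srep x) (scov x).
Proof. exact: (proj2_sig (constructive_indefinite_description _ (fs_cov (proj1 (srep_spec x))))). Qed.

Definition lamC (R : comPzRingType) (n : extnat) (M : bigraded R) (d : nat -> M -> M) (x : Cn R n) (m : M) : M :=
  evs d (scov x) (srep x) m.

Lemma lamC_rep (R : comPzRingType) (n : extnat) (M : bigraded R) (d : nat -> M -> M) (b : raw R)
  (x : Cn R n) (t : seq word) (m : M) :
  ext_ge1 n -> multicomplex n d -> rep b x -> cov b t -> lamC d x m = evs d t b m.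
Proof.
move=> hn hd hb ht; rewrite /lamC.
have [fa ha] := srep_spec x; have ca := @scov_spec R n x.
have hI := rep_ideal ha hb.
have [fI eI] := ideal_ok hn hd hI.
case: (fs_cov fI) => c cI.
have Eb : b = addf (srep x) (subf b (srep x)) by apply: raw_ext => w; rewrite /addf /subf addrC subrK.
have cb : cov b (scov x ++ c) by rewrite Eb; apply: cov_add.
have ca' : cov (srep x) (scov x ++ c) by apply: (cov_sub ca) => v vA; rewrite mem_cat vA.
have cI' : cov (subf b (srep x)) (scov x ++ c) by apply: (cov_sub cI) => v vA; rewrite mem_cat vA orbT.
rewrite (ev_eq _ _ ht cb) {1}Eb evs_add (eI _ cI') addr0.
exact: ev_eq.
Qed.

Lemma cov_deltas (R : comPzRingType) (s : seq word) :
  exists S, forall w, w \in s -> cov (delta_word R w) S.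
Proof.
elim: s => [|w s [S hS]]; first by exists [::].
case: (cov_delta R w) => c hc; exists (c ++ S) => v; rewrite in_cons => /orP [/eqP ->|vs].
  by apply: (cov_sub hc) => u uc; rewrite mem_cat uc.
by apply: (cov_sub (hS v vs)) => u uc; rewrite mem_cat uc orbT.
Qed.

Lemma alg2 (R : comPzRingType) (V : lmodType R) (X Y : V) (a k : R) :
  a *: (X - k *: Y) + k *: (a *: Y) = a *: X.
Proof. by rewrite scalerBr !scalerA mulrC subrK. Qed.

Lemma part2_mod (R : comPzRingType) (n : extnat) (M : bigraded R) (d : nat -> M -> M) :
  ext_ge1 n -> multicomplex n d -> is_Cn_module (d 0%N) (@lamC R n M d).
Proof.
move=> hn hd; have [hlin hdeg hrel hvan] := hd.
split; first by move=> x; apply: lin_evs.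
split.
  move=> x y z a b ha hb hz m.
  case: (fs_cov (rep_fs hn ha)) => sa ca; case: (fs_cov (rep_fs hn hb)) => sb cb.
  have ca' : cov a (sa ++ sb) by apply: (cov_sub ca) => v vA; rewrite mem_cat vA.
  have cb' : cov b (sa ++ sb) by apply: (cov_sub cb) => v vA; rewrite mem_cat vA orbT.
  rewrite (lamC_rep m hn hd hz (cov_add ca cb)) evs_add.
  by rewrite -(lamC_rep m hn hd ha ca') -(lamC_rep m hn hd hb cb').
split.
  move=> r x z a ha hz m; case: (fs_cov (rep_fs hn ha)) => sa ca.
  by rewrite (lamC_rep m hn hd hz (@cov_scale R r _ _ ca)) evs_scale -(lamC_rep m hn hd ha ca).
split.
  by move=> x hx m; rewrite (lamC_rep m hn hd hx (@cov_word R [::])) evs_wordf ?mem_head.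
split.
  move=> x y z a b ha hb hz m.
  case: (fs_cov (rep_fs hn ha)) => sa ca; case: (fs_cov (rep_fs hn hb)) => sb cb.
  rewrite (lamC_rep m hn hd hz (cov_mul ca cb)) evs_mul //.
  by rewrite -(lamC_rep m hn hd hb cb) -(lamC_rep _ hn hd ha ca).
split.
  move=> x a p q ha hom p' q' m hm; case: (fs_cov (rep_fs hn ha)) => sa ca.
  rewrite (lamC_rep m hn hd ha ca) /evs; apply: big_ind => //.
  - exact: bg_hom0.
  - exact: bg_homD.
  move=> w _; case: (eqVneq (a w) 0) => [->|/hom hw]; first by rewrite scale0r; exact: bg_hom0.
  apply: bg_homZ; have := act_deg hdeg w hm; rewrite hw /= => h.
  by rewrite (addrC p) (addrC q).
move=> x y a b p q ha hom [s [us cs Eb]] hb m.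
case: (cov_deltas R s) => S hS.
have cb : cov b S.
  by move=> v; rewrite Eb => /sum_nz [w ws] /mul_nz [_ h]; apply: (hS w ws v h).
rewrite (lamC_rep m hn hd ha cs) (lamC_rep _ hn hd ha cs) (lamC_rep m hn hd hb cb) Eb evs_sum.
rewrite /evs undup_id // (lin_sum _ _ (hlin 0%N)) scaler_sumr -big_split /=.
apply: eq_big_seq => w ws.
rewrite (linZ (hlin 0%N)) -/(evs d S (scalef (a w) (delta_word R w)) m) evs_scale (KW hd (hS w ws)).
case: (eqVneq (a w) 0) => [->|/hom hw]; first by rewrite !scale0r scaler0 addr0.
by rewrite (ksign_wdeg R hw) alg2.
Qed.

Lemma fs_gen (R : comPzRingType) (i : nat) : (0 < i)%N -> finsupp (gen R i).
Proof. by move=> i0; apply: fs_word; rewrite /pos /= i0. Qed.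

Lemma lin_d (R : comPzRingType) (n : extnat) (M : bigraded R) (d0 : M -> M) (lam : Cn R n -> M -> M)
  (d : nat -> M -> M) :
  vbicomplex d0 -> is_Cn_module d0 lam -> assoc_family d0 lam d -> forall i, lin (d i).
Proof.
move=> [hl0 _ _] hmod [h0 hass] [|i]; first by rewrite h0.
have X := rep_mkC n (fs_gen R (ltn0Sn i)).
move=> r x y; rewrite !(hass i.+1 _ (ltn0Sn i) X).
exact: (proj1 hmod).
Qed.

Lemma f_evs (R : comPzRingType) (M N : bigraded R) (d : nat -> M -> M) (e : nat -> N -> N) (f : M -> N)
  (s : seq word) (a : raw R) (m : M) :
  lin f -> (forall i x, f (d i x) = e i (f x)) -> f (evs d s a m) = evs e s a (f m).
Proof.
move=> hf hc; rewrite /evs (lin_sum _ _ hf); apply: eq_bigr => w _.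
rewrite (linZ hf); congr (_ *: _); elim: w => [|i w IH] //=.
by rewrite hc IH.
Qed.

Lemma part3 (R : comPzRingType) (n : extnat) (M N : bigraded R) (d0 : M -> M) (e0 : N -> N)
          (lam : Cn R n -> M -> M) (mu : Cn R n -> N -> N)
          (d : nat -> M -> M) (e : nat -> N -> N) :
     ext_ge1 n ->
     vbicomplex d0 -> vbicomplex e0 ->
     is_Cn_module d0 lam -> is_Cn_module e0 mu ->
     assoc_family d0 lam d -> assoc_family e0 mu e ->
     forall f : M -> N,
       module_morphism d0 e0 lam mu f <-> multicomplex_morphism d e f.
Proof.
move=> hn vd ve ml me ad ae f; split.
  case=> hl hdeg hd0 hlam; split=> // [[|i]] x.
    by rewrite (proj1 ad) (proj1 ae).
  have X := rep_mkC n (fs_gen R (ltn0Sn i)).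
  by rewrite ((proj2 ad) i.+1 _ (ltn0Sn i) X) ((proj2 ae) i.+1 _ (ltn0Sn i) X).
case=> hl hdeg hc; split=> //.
  by move=> m; have := hc 0%N m; rewrite (proj1 ad) (proj1 ae).
move=> x m; case: (rep_ex x) => a [fa ha]; case: (fs_cov fa) => s ca.
rewrite (G hn ml ad (lin_d vd ml ad) fa ha ca) (G hn me ae (lin_d ve me ae) fa ha ca).
exact: f_evs.
Qed.

Lemma mulf_one_r (R : comPzRingType) (a : raw R) : mulf a (wordf R [::]) = a.
Proof.
apply: raw_ext => w; rewrite /mulf /wordf (bigD1 ord_max) //= take_size drop_size eqxx mulr1.
rewrite big1 ?addr0 // => i /eqP Ni.
have -> : (drop i w == [::]) = false; last by rewrite mulr0.
apply/eqP => E; apply: Ni; apply: val_inj => /=.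
have := congr1 size E; rewrite size_drop /= => /eqP; rewrite subn_eq0 => h.
by apply/eqP; rewrite eqn_leq h -ltnS ltn_ord.
Qed.

Lemma mulf_zero_r (R : comPzRingType) (a : raw R) : mulf a (zerof R) = zerof R.
Proof. by apply: raw_ext => w; rewrite /mulf big1 // => i _; rewrite /zerof mulr0. Qed.

Lemma sum_split (R : comPzRingType) (M : bigraded R) (d : nat -> M -> M) (k : nat) (y : M) :
  \sum_(i < k.+2) ((-1) ^+ i : R) *: d i (d (k.+1 - i)%N y) =
  d 0%N (d k.+1 y) - \sum_(1 <= i < k.+1) ((-1) ^+ (i + 1) : R) *: d i (d (k.+1 - i)%N y)
  + (-1) ^+ k.+1 *: d k.+1 (d 0%N y).
Proof.
rewrite -(big_mkord xpredT (fun i => ((-1) ^+ i : R) *: d i (d (k.+1 - i)%N y))).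
rewrite big_nat_recl // big_nat_recr //= subn0 subnn expr0 scale1r.
have -> : \sum_(0 <= i < k) ((-1) ^+ i.+1 : R) *: d i.+1 (d (k.+1 - i.+1)%N y) =
          \sum_(1 <= i < k.+1) ((-1) ^+ i : R) *: d i (d (k.+1 - i)%N y) by rewrite big_add1.
rewrite -sumrN addrA; congr (_ + _ + _); apply: eq_bigr => i _.
by rewrite exprD expr1 mulrN1 scaleNr opprK.
Qed.

Lemma part1 (R : comPzRingType) (n : extnat) (M : bigraded R) (d0 : M -> M) (lam : Cn R n -> M -> M) :
  ext_ge1 n -> vbicomplex d0 -> is_Cn_module d0 lam ->
  exists d : nat -> M -> M, assoc_family d0 lam d /\ multicomplex n d.
Proof.
move=> hn vd hmod.
pose d (i : nat) : M -> M := match i with 0%N => d0 | i'.+1 => lam (mkC n (fs_gen R (ltn0Sn i'))) end.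
have ad : assoc_family d0 lam d.
  split=> // [[|i]] x // _ hx m.
  by rewrite /d (CnE (rep_mkC n (fs_gen R (ltn0Sn i))) hx).
exists d; split=> //.
have hlin := lin_d vd hmod ad.
have [hl0 hdeg0 hsq] := vd.
have [hl [hadd [hsc [hone [hmul [hdeg hk]]]]]] := hmod.
have dX : forall i (i0 : (0 < i)%N), d i = lam (mkC n (fs_gen R i0)).
  move=> [|i] // i0; rewrite /d; congr lam; apply: CnE; apply: rep_mkC.
split=> //.
- move=> [|i].
    move=> p q x hx; rewrite oppr0 subr0; have := hdeg0 p q x hx.
    by rewrite !addr0.
  move=> p q x hx; rewrite (dX i.+1 (ltn0Sn i)).
  have hom : homog (gen R i.+1) (wdeg [:: i.+1]).1 (wdeg [:: i.+1]).2.
    by move=> w /bnz /eqP ->; case: (wdeg _).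
  have := hdeg _ _ _ _ (rep_mkC n (fs_gen R (ltn0Sn i))) hom _ _ _ hx.
  have E1 : (wdeg [:: i.+1]).1 + p = p + - (i.+1%:Z) by rewrite /wdeg /=; lia.
  have E2 : (wdeg [:: i.+1]).2 + q = q + (1 - i.+1%:Z) by rewrite /wdeg /=; lia.
  by rewrite E1 E2.
- move=> [|k] x.
    by rewrite big_ord1 expr0 scale1r /= hsq.
  rewrite sum_split.
  have i0 := ltn0Sn k.
  set b := fun v => \sum_(w <- [:: [:: k.+1]]) gen R k.+1 w * delta_word R w v.
  have Eb : b = Sk R k.+1.
    apply: raw_ext => v; rewrite /b big_cons big_nil addr0 /gen /wordf eqxx mul1r /=.
    by rewrite mulf_one_r mulf_zero_r /addf /scalef /zerof mulr0 addr0.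
  have fb : finsupp b by rewrite Eb; apply: fs_Sk.
  have X := rep_mkC n (fs_gen R i0).
  have Y := rep_mkC n fb.
  have hom : homog (gen R k.+1) (wdeg [:: k.+1]).1 (wdeg [:: k.+1]).2.
    by move=> w /bnz /eqP ->; case: (wdeg _).
  have hD : Delta (gen R k.+1) b.
    exists [:: [:: k.+1]]; split => //; exact: cov_word.
  have K := hk _ _ _ _ _ _ X hom hD Y x.
  rewrite (ksign_wdeg R (surjective_pairing _)) in K.
  have Yb : rep (Sk R k.+1) (mkC n fb) by rewrite -Eb.
  rewrite (G hn hmod ad hlin (fs_Sk R k.+1) Yb (proj1 (@fs_Sk_aux R k.+1))) evs_Sk in K.
  rewrite -(dX _ i0) in K.
  rewrite [d 0%N]/= K.
  set S := \sum_(1 <= i < k.+1) _.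
  rewrite (addrC S) addrK /sgn /= addn0 add1n exprS mulN1r scaleNr addNr //.
- move=> i hi x; have i0 := ext_pos hn hi.
  rewrite (dX i i0).
  have X := rep_mkC n (fs_gen R i0).
  have Z : rep (scalef 0 (gen R i)) (mkC n (fs_gen R i0)).
    rewrite /rep /= /coset.
    have -> : subf (scalef 0 (gen R i)) (gen R i) = scalef (-1) (gen R i).
      by apply: raw_ext => w; rewrite /subf /scalef !mul0r mulN1r add0r.
    by apply: I_scale; apply: I_d.
  by rewrite (hsc _ _ _ _ X Z) scale0r.
Qed.

Lemma part2 (R : comPzRingType) (n : extnat) (M : bigraded R) (d : nat -> M -> M) :
  ext_ge1 n -> multicomplex n d ->
  exists! lam : Cn R n -> M -> M, is_Cn_module (d 0%N) lam /\ assoc_family (d 0%N) lam d.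
Proof.
move=> hn hd; exists (@lamC R n M d); split.
  split; first exact: part2_mod.
  split=> // i x i0 hx m.
  by rewrite (lamC_rep m hn hd hx (@cov_word R [:: i])) evs_wordf ?mem_head.
move=> lam [hmod had].
apply: functional_extensionality => x; apply: functional_extensionality => m.
have [fa ha] := srep_spec x.
have [hl _ _ _] := hd.
by rewrite (G hn hmod had hl fa ha (@scov_spec R n x)).
Qed.

Theorem mainTheorem12 (R : comPzRingType) (n : extnat) (hn : ext_ge1 n) :
  (* objects: module -> n-multicomplex *)
  (forall (M : bigraded R) (d0 : M -> M) (lam : Cn R n -> M -> M),
     vbicomplex d0 -> is_Cn_module d0 lam ->
     exists d : nat -> M -> M, assoc_family d0 lam d /\ multicomplex n d)
  /\
  (* objects: every n-multicomplex comes from a unique module structure *)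
  (forall (M : bigraded R) (d : nat -> M -> M),
     multicomplex n d ->
     exists! lam : Cn R n -> M -> M,
       is_Cn_module (d 0%N) lam /\ assoc_family (d 0%N) lam d)
  /\
  (* morphisms correspond *)
  (forall (M N : bigraded R) (d0 : M -> M) (e0 : N -> N)
          (lam : Cn R n -> M -> M) (mu : Cn R n -> N -> N)
          (d : nat -> M -> M) (e : nat -> N -> N),
     vbicomplex d0 -> vbicomplex e0 ->
     is_Cn_module d0 lam -> is_Cn_module e0 mu ->
     assoc_family d0 lam d -> assoc_family e0 mu e ->
     forall f : M -> N,
       module_morphism d0 e0 lam mu f <-> multicomplex_morphism d e f).
Proof.
split; first by move=> M d0 lam vd hm; apply: part1.
split; first by move=> M d hd; apply: part2.
by move=> M N d0 e0 lam mu d e; apply: part3.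
Qed.
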